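(* Let $A\in\mathbb{T}^{n\times d}$ and $b\in\mathbb{T}^n$, let $B$ be a tropical basis of the system $A\odot x=b$, and let $j\in[d]\setminus B$ be such that the $j$-th column of $A$ has at least one entry different from $-\infty$. Then there exists a tropical basis $B'\subset B\cup\{j\}$ with $B'\neq B$. Moreover, if the instance $(A,b)$ is nondegenerate, this basis $B'$ is unique.
   Context: $\mathbb{T}=\mathbb{R}\cup\{-\infty\}$, $\oplus=\max$, $\odot=+$, $(A\odot x)_i=\max_j(A_{ij}+x_j)$; conventions $a-(-\infty)=+\infty$ for $a\in\mathbb{T}$. A tropical (feasible) basis of $A\odot x=b$, $x\in\mathbb{T}^d$, is a subset $B\subset[d]$ of cardinality $n$ for which there is a bijection $\phi:[n]\to B$ such that for every $i\in[n]$, $b_i-A_{i\phi(i)}\in\mathbb{T}$ and it is minimal among $b_k-A_{k\phi(i)}$, $k\in[n]$. Such a basis is nondegenerate if for each $i\in[n]$ the minimum $\min_k(b_k-A_{k\phi(i)})$ is a real number attained by a unique $k$. The instance $(A,b)$ is nondegenerate if all its tropical bases are nondegenerate. *)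

(* Defs.v *)
From HB Require Import structures.
From mathcomp Require Import all_boot all_order all_algebra.
From mathcomp Require Import reals constructive_ereal.
Set Implicit Arguments. Unset Strict Implicit. Unset Printing Implicit Defensive.
Import Order.TTheory GRing.Theory Num.Theory.
Local Open Scope ring_scope.
Local Open Scope ereal_scope.

(* Tropical numbers T = R ∪ {-oo}: [None] is -oo, [Some r] is the real r. *)
Definition trop (R : realType) := option R.

(* a - c for a, c in T, valued in T ∪ {+oo} (inside \bar R), with the
   convention a - (-oo) = +oo for every a in T (including a = -oo). *)
Definition tdiff (R : realType) (a c : trop R) : \bar R :=
  match c with
  | None => +oo
  | Some c' => match a with
               | None => -oo
               | Some a' => (a' - c')%R%:E
               end
  end.

Definition tropical_basis (R : realType) (n d : nat)
    (A : 'M[trop R]_(n, d)) (b : 'I_n -> trop R) (B : {set 'I_d}) : Prop :=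
  #|B| = n /\
  exists phi : 'I_n -> 'I_d,
    [/\ injective phi, [set phi i | i : 'I_n] = B &
        forall i : 'I_n,
          tdiff (b i) (A i (phi i)) != +oo /\
          forall k : 'I_n, tdiff (b i) (A i (phi i)) <= tdiff (b k) (A k (phi i))].

Definition nondegenerate_basis (R : realType) (n d : nat)
    (A : 'M[trop R]_(n, d)) (b : 'I_n -> trop R) (B : {set 'I_d}) : Prop :=
  forall c, c \in B ->
    exists k : 'I_n,
      tdiff (b k) (A k c) \is a fin_num /\
      forall k' : 'I_n, k' != k -> tdiff (b k) (A k c) < tdiff (b k') (A k' c).

Definition nondegenerate_instance (R : realType) (n d : nat)
    (A : 'M[trop R]_(n, d)) (b : 'I_n -> trop R) : Prop :=
  forall B, tropical_basis A b B -> nondegenerate_basis A b B.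

(* Main.v *)
Require Import Defs.
From mathcomp Require Import all_boot all_order all_algebra.
From mathcomp Require Import reals constructive_ereal.
Import Order.TTheory.

Lemma ex_minimizer (R : realType) (I : finType) (i0 : I) (F : I -> \bar R) :
  exists i, forall k, (F i <= F k)%E.
Proof.
case: (@arg_minP _ _ I i0 xpredT F isT) => i _ H.
by exists i => k; apply: H.
Qed.

Lemma nondeg_uniq (R : realType) (n d : nat) (A : 'M[trop R]_(n, d))
    (b : 'I_n -> trop R) (S : {set 'I_d}) c i1 i2 :
  nondegenerate_basis A b S -> c \in S ->
  (forall k, (tdiff (b i1) (A i1 c) <= tdiff (b k) (A k c))%E) ->
  (forall k, (tdiff (b i2) (A i2 c) <= tdiff (b k) (A k c))%E) ->
  i1 = i2.
Proof.
move=> ND cS H1 H2; case: (ND c cS) => k [_ Hk].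
have E : forall i, (forall k', (tdiff (b i) (A i c) <= tdiff (b k') (A k' c))%E) -> i = k.
  move=> i Hi; apply/eqP; apply/negPn/negP => /Hk ltk.
  by move: (Hi k); rewrite leNgt ltk.
by rewrite (E _ H1) (E _ H2).
Qed.

Arguments nondeg_uniq {R n d A b S c i1 i2}.

Theorem lemma4p2 (R : realType) (n d : nat) (A : 'M[trop R]_(n, d))
    (b : 'I_n -> trop R) (B : {set 'I_d}) (j : 'I_d) :
  tropical_basis A b B ->
  j \notin B ->
  (exists i : 'I_n, A i j != None) ->
  exists B' : {set 'I_d},
    [/\ tropical_basis A b B', B' \subset j |: B, B' != B &
        (nondegenerate_instance A b ->
         forall B'' : {set 'I_d},
           tropical_basis A b B'' -> B'' \subset j |: B -> B'' != B ->
           B'' = B')].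
Proof.
move=> [cardB [phi [phiI phiB phiM]]] jB [i0 Ai0].
have [s Hs] := ex_minimizer R _ i0 (fun i => tdiff (b i) (A i j)).
have Hsfin : tdiff (b s) (A s j) != +oo%E.
  apply: contra_neq Ai0 => Hoo.
  move: (Hs i0); rewrite Hoo leye_eq.
  by case: (A i0 j) => // c; case: (b i0).
pose phi' i := if i == s then j else phi i.
have phiB' : forall i, phi i \in B by move=> i; rewrite -phiB; apply: imset_f.
have phi'I : injective phi'.
  move=> x y; rewrite /phi'.
  case: eqP => [->|xs]; case: eqP => [->|ys] //.
  - by move=> E; move: (phiB' y); rewrite -E (negbTE jB).
  - by move=> E; move: (phiB' x); rewrite E (negbTE jB).
  - exact: phiI.
pose B' := [set phi' i | i : 'I_n].
have basisB' : tropical_basis A b B'.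
  split; first by rewrite card_imset // card_ord.
  exists phi'; split => // i; rewrite /phi'; have [->|ns] := eqVneq i s.
    by split.
  exact: (phiM i).
have jB' : j \in B' by apply/imsetP; exists s => //; rewrite /phi' eqxx.
exists B'; split => //.
- apply/subsetP => x /imsetP [i _ ->]; rewrite /phi' in_setU1.
  by case: ifP => _; rewrite ?eqxx // phiB' orbT.
- by apply: contraNneq jB => <-.
move=> ND B'' [cardB'' [phi'' [phi''I phi''B phi''M]]] sub neq.
have basisB : tropical_basis A b B by split => //; exists phi.
have jB'' : j \in B''.
  apply/negPn/negP => jN; move/negP: neq; apply; rewrite eqEcard cardB cardB'' leqnn andbT.
  apply/subsetP => x xB; move/subsetP: sub => /(_ x xB); rewrite in_setU1.
  by case/orP => // /eqP E; rewrite -E xB in jN.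
move: jB''; rewrite -phi''B => /imsetP [i1 _ Ei1].
have i1s : i1 = s.
  apply: (nondeg_uniq (ND _ basisB') jB'); last exact: Hs.
  by rewrite Ei1; case: (phi''M i1).
rewrite /B'; apply: eq_imset => i; rewrite /phi'.
have [->|ins] := eqVneq i s; first by rewrite -i1s.
have : phi'' i \in j |: B by move/subsetP: sub; apply; rewrite -phi''B imset_f.
rewrite in_setU1; case/orP.
  by move/eqP; rewrite Ei1 => /phi''I E; move: ins; rewrite E i1s eqxx.
rewrite -phiB => /imsetP [i2 _ E2]; rewrite E2.
have -> // : i = i2.
apply: (nondeg_uniq (ND _ basisB) (phiB' i2)).
  by rewrite -E2; case: (phi''M i).
by case: (phiM i2).
Qed.
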